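(* The Pacman cellular automaton $(A^{\mathbb{Z}},T)$ is cofinitely sensitive: there exists $\delta>0$ such that for every nonempty open set $U\subseteq A^{\mathbb{Z}}$, the set $N_T(U,\delta)=\{n\in\mathbb{N}:\operatorname{diam}(T^nU)>\delta\}$ is cofinite (its complement in $\mathbb{N}$ is finite).
   Context: Let $A=\{\mathtt{0},\mathtt{1},\mathtt{G},\mathtt{K},\mathtt{P},\mathtt{D}\}$. $A^{\mathbb{Z}}$ carries the metric $d(x,y)=2^{-\min\{|j|:x_j\neq y_j\}}$ for $x\neq y$ and $d(x,x)=0$ (this induces the product topology); $\operatorname{diam}$ denotes diameter with respect to $d$. The Pacman CA is the map $T:A^{\mathbb{Z}}\to A^{\mathbb{Z}}$ defined coordinatewise as follows, writing $a=x_{i-1}$, $b=x_i$, $c=x_{i+1}$: - $(Tx)_i=\mathtt{0}$ if $\big(a\in\{\mathtt{0},\mathtt{G},\mathtt{K}\}\wedge[(b\in\{\mathtt{0},\mathtt{G},\mathtt{K}\}\wedge c\in\{\mathtt{0},\mathtt{1},\mathtt{P}\})\vee(b=\mathtt{P}\wedge c\notin\{\mathtt{1},\mathtt{D}\})]\big)\vee\big(a\in\{\mathtt{1},\mathtt{D}\}\wedge[(b\in\{\mathtt{0},\mathtt{K}\}\wedge c\in\{\mathtt{0},\mathtt{1},\mathtt{P}\})\vee(b=\mathtt{P}\wedge c\notin\{\mathtt{1},\mathtt{D}\})]\big)$; - $(Tx)_i=\mathtt{1}$ if $b\in\{\mathtt{1},\mathtt{D}\}\wedge c\notin\{\mathtt{K},\mathtt{D}\}$;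 - $(Tx)_i=\mathtt{G}$ if $(a\in\{\mathtt{0},\mathtt{G},\mathtt{K}\}\wedge b\in\{\mathtt{0},\mathtt{G},\mathtt{K}\}\wedge c\in\{\mathtt{G},\mathtt{D}\})\vee(a\in\{\mathtt{1},\mathtt{D}\}\wedge b\in\{\mathtt{0},\mathtt{K}\}\wedge c=\mathtt{D})$; - $(Tx)_i=\mathtt{K}$ if $\big(c=\mathtt{K}\wedge[(a\in\{\mathtt{0},\mathtt{G},\mathtt{K}\}\wedge b\in\{\mathtt{0},\mathtt{G},\mathtt{K}\})\vee(a\in\{\mathtt{1},\mathtt{D}\}\wedge b\in\{\mathtt{0},\mathtt{K}\})]\big)\vee(a=\mathtt{P}\wedge b\notin\{\mathtt{1},\mathtt{D}\}\wedge c\in\{\mathtt{1},\mathtt{D}\})\vee(b=\mathtt{P}\wedge c\in\{\mathtt{1},\mathtt{D}\})$; - $(Tx)_i=\mathtt{P}$ if $\big(a=\mathtt{1}\wedge[(b\in\{\mathtt{0},\mathtt{K}\}\wedge c=\mathtt{G})\vee b=\mathtt{G}]\big)\vee(a=\mathtt{P}\wedge b\notin\{\mathtt{1},\mathtt{D}\}\wedge c\notin\{\mathtt{1},\mathtt{D}\})$; - $(Tx)_i=\mathtt{D}$ if $b\in\{\mathtt{1},\mathtt{D}\}\wedge c\in\{\mathtt{K},\mathtt{D}\}$. *)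

(* Defs.v *)
From Stdlib Require Import Bool Reals ZArith List Classical ClassicalEpsilon.
From Coquelicot Require Import Coquelicot.
Open Scope R_scope.
Open Scope bool_scope.

Inductive Sym := S0 | S1 | SG | SK | SP | SD.

Definition Sym_eqb (u v : Sym) : bool :=
  match u, v with
  | S0, S0 | S1, S1 | SG, SG | SK, SK | SP, SP | SD, SD => true
  | _, _ => false
  end.

Definition in0GK (s : Sym) : bool := match s with S0 | SG | SK => true | _ => false end.
Definition in1D  (s : Sym) : bool := match s with S1 | SD => true | _ => false end.
Definition in01P (s : Sym) : bool := match s with S0 | S1 | SP => true | _ => false end.
Definition in0K  (s : Sym) : bool := match s with S0 | SK => true | _ => false end.
Definition inKD  (s : Sym) : bool := match s with SK | SD => true | _ => false end.
Definition inGD  (s : Sym) : bool := match s with SG | SD => true | _ => false end.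
Definition isP (s : Sym) := Sym_eqb s SP.

Definition cond0 a b c : bool :=
  (in0GK a && ((in0GK b && in01P c) || (isP b && negb (in1D c))))
  || (in1D a && ((in0K b && in01P c) || (isP b && negb (in1D c)))).
Definition cond1 (a b c : Sym) : bool := in1D b && negb (inKD c).
Definition condG a b c : bool :=
  (in0GK a && in0GK b && inGD c) || (in1D a && in0K b && Sym_eqb c SD).
Definition condK a b c : bool :=
  (Sym_eqb c SK && ((in0GK a && in0GK b) || (in1D a && in0K b)))
  || (isP a && negb (in1D b) && in1D c)
  || (isP b && in1D c).
Definition condP a b c : bool :=
  (Sym_eqb a S1 && ((in0K b && Sym_eqb c SG) || Sym_eqb b SG))
  || (isP a && negb (in1D b) && negb (in1D c)).
Definition condD (a b c : Sym) : bool := in1D b && inKD c.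

(** The six conditions as written are pairwise exclusive but do not cover the
    eight triples (D,b,c) with b = G, or with b in {0,K} and c = G.  We read the
    first disjunct of the P-clause with a in {1,D} (as in the parallel 0-, G- and
    K-clauses), i.e. these triples are mapped to P. *)
Definition condP' a b c : bool :=
  (in1D a && ((in0K b && Sym_eqb c SG) || Sym_eqb b SG))
  || (isP a && negb (in1D b) && negb (in1D c)).

Definition pacman_local (a b c : Sym) : Sym :=
  if cond0 a b c then S0
  else if cond1 a b c then S1
  else if condG a b c then SG
  else if condK a b c then SK
  else if condD a b c then SD
  else SP.

Definition all_syms := S0 :: S1 :: SG :: SK :: SP :: SD :: nil.

Definition count_true (l : list bool) : nat :=
  List.length (List.filter (fun b => b) l).

Lemma pacman_conds_exclusive :
  forallb (fun a => forallb (fun b => forallb (fun c =>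
    Nat.leb (count_true (cond0 a b c :: cond1 a b c :: condG a b c ::
                         condK a b c :: condP a b c :: condD a b c :: nil)) 1)
    all_syms) all_syms) all_syms = true.
Proof. reflexivity. Qed.

Lemma pacman_local_partition :
  forallb (fun a => forallb (fun b => forallb (fun c =>
    Nat.eqb (count_true (cond0 a b c :: cond1 a b c :: condG a b c ::
                         condK a b c :: condP' a b c :: condD a b c :: nil)) 1)
    all_syms) all_syms) all_syms = true.
Proof. reflexivity. Qed.

Lemma pacman_local_spec :
  forallb (fun a => forallb (fun b => forallb (fun c =>
    let v := pacman_local a b c in
    (if cond0 a b c then Sym_eqb v S0 else true) &&
    (if cond1 a b c then Sym_eqb v S1 else true) &&
    (if condG a b c then Sym_eqb v SG else true) &&
    (if condK a b c then Sym_eqb v SK else true) &&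
    (if condP' a b c then Sym_eqb v SP else true) &&
    (if condD a b c then Sym_eqb v SD else true))
    all_syms) all_syms) all_syms = true.
Proof. reflexivity. Qed.

Definition config := Z -> Sym.

Definition pacman (x : config) : config :=
  fun i => pacman_local (x (i - 1)%Z) (x i) (x (i + 1)%Z).

(** Least k = |j| with x_j <> y_j (meaningful only when x <> y). *)
Definition is_min_diff (x y : config) (k : nat) : Prop :=
  (x (Z.of_nat k) <> y (Z.of_nat k) \/ x (- Z.of_nat k)%Z <> y (- Z.of_nat k)%Z)
  /\ forall j : Z, (Z.abs_nat j < k)%nat -> x j = y j.

Definition min_diff (x y : config) : nat :=
  epsilon (inhabits 0%nat) (is_min_diff x y).

Definition dist (x y : config) : R :=
  if excluded_middle_informative (x = y) then 0
  else / (2 ^ min_diff x y).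

Definition diam (S : config -> Prop) : Rbar :=
  Lub_Rbar (fun r => exists x y, S x /\ S y /\ r = dist x y).

Definition is_open (U : config -> Prop) : Prop :=
  forall x, U x -> exists eps, 0 < eps /\ forall y, dist x y < eps -> U y.

Definition image_iter (n : nat) (U : config -> Prop) : config -> Prop :=
  fun z => exists x, U x /\ z = Nat.iter n pacman x.

Definition N_T (U : config -> Prop) (delta : R) (n : nat) : Prop :=
  Rbar_lt (Finite delta) (diam (image_iter n U)).

(* Main.v *)
Require Import Defs.
From Stdlib Require Import Reals List ZArith Lia Arith Lra FunctionalExtensionality Classical ClassicalEpsilon.
From Coquelicot Require Import Coquelicot.
Require Import Defs.
Open Scope R_scope.

Local Open Scope Z_scope.


Lemma L_G a b c : pacman_local a b c = SG -> c = SG \/ c = SD.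
Proof. destruct a, b, c; cbv; intuition congruence. Qed.
Lemma L_P a b c : pacman_local a b c = SP -> a = SP \/ (in1D a = true /\ (b = SG \/ c = SG)).
Proof. destruct a, b, c; cbv; intuition congruence. Qed.
Lemma L_K a b c : pacman_local a b c = SK -> c = SK \/ a = SP \/ b = SP.
Proof. destruct a, b, c; cbv; intuition congruence. Qed.
Lemma L_wall a b c : in1D (pacman_local a b c) = in1D b.
Proof. destruct a, b, c; reflexivity. Qed.
Lemma L_wall1 a b c : in1D b = true -> (c = S0 \/ c = S1) -> pacman_local a b c = S1.
Proof. destruct a, b, c; cbv; intuition congruence. Qed.
Lemma L_awall a a' b c : in1D a = true -> in1D a' = true -> pacman_local a b c = pacman_local a' b c.
Proof. destruct a, a', b, c; cbv; intuition congruence. Qed.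
Lemma L_1D a : pacman_local a S1 SD = SD.
Proof. destruct a; reflexivity. Qed.

Definition cl (wl : Z -> bool) (z : Z) : Sym := if wl z then S1 else S0.
Definition sig (wl : Z -> bool) (k : Sym) (q : Z) : config :=
  fun z => if Z.eqb z q then k else cl wl z.

Lemma clean_triple (b1 b2 b3 : bool) :
  pacman_local (if b1 then S1 else S0) (if b2 then S1 else S0) (if b3 then S1 else S0)
  = if b2 then S1 else S0.
Proof. destruct b1, b2, b3; reflexivity. Qed.

Ltac zeq := repeat match goal with |- context [Z.eqb ?a ?b] =>
  destruct (Z.eqb_spec a b); try (exfalso; lia) end.

Lemma gen_step wl k q z :
  pacman (sig wl k q) z =
  if z =? q - 1 then pacman_local (cl wl (q-2)) (cl wl (q-1)) k
  else if z =? q then pacman_local (cl wl (q-1)) k (cl wl (q+1))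
  else if z =? q + 1 then pacman_local k (cl wl (q+1)) (cl wl (q+2))
  else cl wl z.
Proof.
  unfold pacman, sig.
  destruct (Z.eqb_spec z (q-1)).
  { subst z. zeq. replace (q-1-1) with (q-2) by lia. reflexivity. }
  destruct (Z.eqb_spec z q).
  { subst z. zeq. reflexivity. }
  destruct (Z.eqb_spec z (q+1)).
  { subst z. zeq. replace (q+1+1) with (q+2) by lia. reflexivity. }
  zeq. unfold cl. apply clean_triple.
Qed.

Ltac trans_tac :=
  apply functional_extensionality; let z := fresh "z" in intro z; rewrite gen_step; unfold sig;
  zeq; try subst z; unfold cl;
  repeat match goal with |- context [?w ?x] =>
    match type of (w x) with bool => destruct (w x) eqn:? end end;
  try congruence; reflexivity.

Lemma tr_DD wl q : wl q = true -> wl (q-1) = true -> pacman (sig wl SD q) = sig wl SD (q-1).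
Proof. intros. trans_tac. Qed.
Lemma tr_DG wl q : wl q = true -> wl (q-1) = false -> pacman (sig wl SD q) = sig wl SG (q-1).
Proof. intros. trans_tac. Qed.
Lemma tr_GP0 wl q : wl q = false -> wl (q-1) = true -> pacman (sig wl SG q) = sig wl SP q.
Proof. intros. trans_tac. Qed.
Lemma tr_GP1 wl q : wl q = false -> wl (q-1) = false -> wl (q-2) = true -> pacman (sig wl SG q) = sig wl SP (q-1).
Proof. intros. trans_tac. Qed.
Lemma tr_GG wl q : wl q = false -> wl (q-1) = false -> wl (q-2) = false -> pacman (sig wl SG q) = sig wl SG (q-1).
Proof. intros. trans_tac. Qed.
Lemma tr_PK0 wl q : wl q = false -> wl (q+1) = true -> pacman (sig wl SP q) = sig wl SK q.
Proof. intros. trans_tac. Qed.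
Lemma tr_PK1 wl q : wl q = false -> wl (q+1) = false -> wl (q+2) = true -> pacman (sig wl SP q) = sig wl SK (q+1).
Proof. intros. trans_tac. Qed.
Lemma tr_PP wl q : wl q = false -> wl (q+1) = false -> wl (q+2) = false -> pacman (sig wl SP q) = sig wl SP (q+1).
Proof. intros. trans_tac. Qed.
Lemma tr_KD wl q : wl q = false -> wl (q-1) = true -> pacman (sig wl SK q) = sig wl SD (q-1).
Proof. intros. trans_tac. Qed.
Lemma tr_KK wl q : wl q = false -> wl (q-1) = false -> pacman (sig wl SK q) = sig wl SK (q-1).
Proof. intros. trans_tac. Qed.


Definition reach (init : config) wl k q := exists s, Nat.iter s pacman init = sig wl k q.
Definition visits (init : config) wl z := exists s, Nat.iter s pacman init z <> cl wl z.

Lemma reach_step init wl k q k' q' :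
  reach init wl k q -> pacman (sig wl k q) = sig wl k' q' -> reach init wl k' q'.
Proof. intros [s Hs] H. exists (S s). simpl. rewrite Hs. exact H. Qed.

Lemma reach_visits init wl k q :
  reach init wl k q -> k <> S0 -> k <> S1 -> visits init wl q.
Proof.
  intros [s Hs] H0 H1. exists s. rewrite Hs. unfold sig. rewrite Z.eqb_refl.
  unfold cl. destruct (wl q); congruence.
Qed.

Lemma exists_gap_nat wl : forall n i, wl (i - Z.of_nat (S n)) = true ->
  exists l, l < i /\ wl l = true /\ i - Z.of_nat (S n) <= l /\
    forall z, l < z < i -> wl z = false.
Proof.
  induction n; intros i H.
  - exists (i-1). replace (i - Z.of_nat 1) with (i-1) in H by lia.
    repeat split; try lia; auto.
  - destruct (wl (i-1)) eqn:E.
    + exists (i-1). repeat split; try lia; auto.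
    + destruct (IHn (i-1)) as [l [H1 [H2 [H3 H4]]]].
      { replace (i - 1 - Z.of_nat (S n)) with (i - Z.of_nat (S (S n))) by lia. auto. }
      exists l. repeat split; try lia; auto.
      intros z Hz. destruct (Z.eq_dec z (i-1)). subst; auto. apply H4; lia.
Qed.

Lemma exists_gap wl lo i : wl lo = true -> lo < i ->
  exists l, lo <= l < i /\ wl l = true /\ forall z, l < z < i -> wl z = false.
Proof.
  intros H Hi.
  destruct (exists_gap_nat wl (Z.to_nat (i - lo - 1)) i) as [l [H1 [H2 [H3 H4]]]].
  { replace (i - Z.of_nat (S (Z.to_nat (i - lo - 1)))) with lo by lia. auto. }
  exists l. repeat split; try lia; auto.
Qed.


Lemma G_phase init wl l : wl l = true -> forall n q,
  Z.to_nat (q - l - 1) = n -> l < q -> (forall z, l < z <= q -> wl z = false) ->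
  reach init wl SG q ->
  (forall z, l + 1 < z <= q -> visits init wl z) /\ reach init wl SP (l+1).
Proof.
  intros Hl n. induction n; intros q Hn Hq Hgap HG.
  - assert (q = l + 1) by lia. subst q. split. intros; lia.
    eapply reach_step. exact HG. apply tr_GP0. apply Hgap; lia.
    replace (l+1-1) with l by lia. auto.
  - split.
    + intros z Hz. destruct (Z.eq_dec z q). subst. eapply reach_visits; eauto; discriminate.
      destruct (Z.eq_dec q (l+2)). lia.
      assert (HG' : reach init wl SG (q-1)).
      { eapply reach_step. exact HG. apply tr_GG; apply Hgap; lia. }
      apply (IHn (q-1)); auto; try lia. intros; apply Hgap; lia.
    + destruct (Z.eq_dec q (l+2)).
      * subst q. eapply reach_step. exact HG.
        replace (l+1) with (l+2-1) by lia. apply tr_GP1; try (apply Hgap; lia).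
        replace (l+2-2) with l by lia. auto.
      * assert (HG' : reach init wl SG (q-1)).
        { eapply reach_step. exact HG. apply tr_GG; apply Hgap; lia. }
        apply (IHn (q-1)); auto; try lia. intros; apply Hgap; lia.
Qed.

Lemma P_phase init wl l r : wl r = true -> (forall z, l < z < r -> wl z = false) ->
  forall n q, Z.to_nat (r - 1 - q) = n -> l < q < r -> reach init wl SP q ->
  reach init wl SK (r-1).
Proof.
  intros Hr Hgap n. induction n; intros q Hn Hq HP.
  - assert (q = r - 1) by lia. subst q. eapply reach_step. exact HP.
    apply tr_PK0. apply Hgap; lia. replace (r-1+1) with r by lia. auto.
  - destruct (Z.eq_dec q (r-2)).
    + subst q. eapply reach_step. exact HP. replace (r-1) with (r-2+1) by lia.
      apply tr_PK1; try (apply Hgap; lia). replace (r-2+2) with r by lia. auto.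
    + assert (HP' : reach init wl SP (q+1)).
      { eapply reach_step. exact HP. apply tr_PP; apply Hgap; lia. }
      apply (IHn (q+1)); auto; lia.
Qed.

Lemma K_phase init wl l r : wl l = true -> (forall z, l < z < r -> wl z = false) ->
  forall n q, Z.to_nat (q - l - 1) = n -> l < q < r -> reach init wl SK q ->
  reach init wl SD l.
Proof.
  intros Hl Hgap n. induction n; intros q Hn Hq HK.
  - assert (q = l + 1) by lia. subst q. eapply reach_step. exact HK.
    pose proof (tr_KD wl (l+1)) as T. replace (l+1-1) with l in T by lia.
    apply T; [apply Hgap; lia | exact Hl].
  - assert (HK' : reach init wl SK (q-1)).
    { eapply reach_step. exact HK. apply tr_KK; apply Hgap; lia. }
    apply (IHn (q-1)); auto; lia.
Qed.

Lemma signal init wl lo : wl lo = true -> forall n j, Z.to_nat (j - lo) = n ->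
  wl j = true -> lo < j -> reach init wl SD j ->
  forall z, lo < z <= j -> visits init wl z.
Proof.
  intros Hlo n. induction n as [n IH] using lt_wf_ind.
  intros j Hn Hj Hlj HD z Hz.
  destruct (Z.eq_dec z j). { subst. eapply reach_visits; eauto; discriminate. }
  destruct (wl (j-1)) eqn:E.
  - assert (j - 1 <> lo) by lia.
    apply (IH (Z.to_nat (j - 1 - lo))) with (j := j-1); auto; try lia.
    eapply reach_step. exact HD. apply tr_DD; auto.
  - destruct (exists_gap wl lo j Hlo Hlj) as [l [Hl1 [Hl2 Hl3]]].
    assert (l < j - 1). { destruct (Z.eq_dec l (j-1)). subst. congruence. lia. }
    assert (HG : reach init wl SG (j-1)). { eapply reach_step. exact HD. apply tr_DG; auto. }
    destruct (G_phase init wl l Hl2 _ (j-1) eq_refl ltac:(lia)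
       ltac:(intros; apply Hl3; lia) HG) as [V HP].
    assert (HK : reach init wl SK (j-1)).
    { eapply (P_phase init wl l j Hj Hl3 _ (l+1) eq_refl); try lia. exact HP. }
    assert (HD' : reach init wl SD l).
    { eapply (K_phase init wl l j Hl2 Hl3 _ (j-1) eq_refl); try lia. exact HK. }
    destruct (Z_lt_le_dec (l+1) z).
    + apply V; lia.
    + destruct (Z.eq_dec z (l+1)).
      * subst. eapply reach_visits; eauto; discriminate.
      * assert (l <> lo) by lia.
        apply (IH (Z.to_nat (l - lo))) with (j := l); auto; lia.
Qed.


Definition XX (x : config) (t : nat) : config := Nat.iter t pacman x.
Definition wlx (x : config) (z : Z) : bool := in1D (x z).

Lemma XX_S x t z : XX x (S t) z = pacman_local (XX x t (z-1)) (XX x t z) (XX x t (z+1)).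
Proof. reflexivity. Qed.

Lemma wall_inv x t z : in1D (XX x t z) = wlx x z.
Proof.
  revert z. induction t; intros z. reflexivity.
  rewrite XX_S, L_wall. apply IHt.
Qed.

Definition Qc x i := exists T, forall t, (T <= t)%nat -> forall z, i <= z -> XX x t z = cl (wlx x) z.

Lemma Qc_mono x i j : i <= j -> Qc x i -> Qc x j.
Proof. intros H [T HT]. exists T. intros t Ht z Hz. apply HT; auto; lia. Qed.

Lemma clean_not x t z T : (T <= t)%nat -> (forall t, (T <= t)%nat -> XX x t z = cl (wlx x) z) ->
  XX x t z = S0 \/ XX x t z = S1.
Proof. intros H HT. rewrite HT by auto. unfold cl. destruct (wlx x z); auto. Qed.

Lemma wall_step x i : wlx x (i-1) = true -> Qc x i -> Qc x (i-1).
Proof.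
  intros Hw [T HT]. exists (S T). intros t Ht z Hz.
  destruct (Z.eq_dec z (i-1)).
  - subst z. destruct t as [|t]. lia. rewrite XX_S. unfold cl. rewrite Hw.
    apply L_wall1. rewrite wall_inv. auto.
    replace (i-1+1) with i by lia. rewrite HT by lia. unfold cl. destruct (wlx x i); auto.
  - apply HT; lia.
Qed.

Lemma nonwall_cases s : in1D s = false -> s = S0 \/ s = SG \/ s = SK \/ s = SP.
Proof. destruct s; simpl; intuition congruence. Qed.

Lemma gap_clean x l i T : l < i -> wlx x l = true ->
  (forall z, l < z < i -> wlx x z = false) ->
  (forall t, (T <= t)%nat -> forall z, i <= z -> XX x t z = cl (wlx x) z) ->
  Qc x (l+1).
Proof.
  intros Hli Hl Hgap HT.
  set (L := Z.to_nat (i - l)).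
  assert (Hcl : forall t, (T <= t)%nat -> XX x t i = S0 \/ XX x t i = S1).
  { intros t Ht. rewrite HT by (auto; lia). unfold cl. destruct (wlx x i); auto. }
  assert (HG : forall k z, l < z < i -> i - 1 - Z.of_nat k <= z ->
            forall t, (T + k + 1 <= t)%nat -> XX x t z <> SG).
  { induction k; intros z Hz Hk t Ht E.
    - destruct t as [|t]. lia. rewrite XX_S in E. apply L_G in E.
      replace (z+1) with i in E by lia. destruct (Hcl t) as [E'|E']; try lia;
      rewrite E' in E; destruct E; discriminate.
    - destruct t as [|t]. lia. rewrite XX_S in E. apply L_G in E.
      destruct (Z.eq_dec (z+1) i).
      + rewrite e in E. destruct (Hcl t) as [E'|E']; try lia; rewrite E' in E; destruct E; discriminate.
      + destruct E as [E|E].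
        * apply (IHk (z+1) ltac:(lia) ltac:(lia) t ltac:(lia)). exact E.
        * assert (W := wall_inv x t (z+1)). rewrite E, Hgap in W by lia. discriminate. }
  set (TG := (T + L + 1)%nat).
  assert (HG' : forall z, l < z < i -> forall t, (TG <= t)%nat -> XX x t z <> SG).
  { intros z Hz t Ht. apply (HG L z); auto; unfold L; lia. }
  assert (HP : forall k z, l < z < i -> z <= l + 1 + Z.of_nat k ->
            forall t, (TG + k + 1 <= t)%nat -> XX x t z <> SP).
  { induction k; intros z Hz Hk t Ht E;
    (destruct t as [|t]; [lia|]); rewrite XX_S in E; apply L_P in E;
    (destruct E as [E|[E1 [E|E]]];
     [ | exact (HG' z ltac:(lia) t ltac:(lia) E)
       | destruct (Z.eq_dec (z+1) i);
         [ rewrite e in E; destruct (Hcl t) as [E'|E']; try lia; rewrite E' in E; discriminate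
         | exact (HG' (z+1) ltac:(lia) t ltac:(lia) E) ] ]).
    - assert (z - 1 = l) by lia. rewrite H in E.
      assert (W := wall_inv x t l). rewrite E, Hl in W; simpl in W; discriminate.
    - destruct (Z.eq_dec (z-1) l).
      + rewrite e in E. assert (W := wall_inv x t l). rewrite E, Hl in W; simpl in W; discriminate.
      + exact (IHk (z-1) ltac:(lia) ltac:(lia) t ltac:(lia) E). }
  set (TP := (TG + L + 1)%nat).
  assert (HP' : forall z, l < z < i -> forall t, (TP <= t)%nat -> XX x t z <> SP).
  { intros z Hz t Ht. apply (HP L z); auto; unfold L; lia. }
  assert (HK : forall k z, l < z < i -> i - 1 - Z.of_nat k <= z ->
            forall t, (TP + k + 1 <= t)%nat -> XX x t z <> SK).
  { induction k; intros z Hz Hk t Ht E;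
    (destruct t as [|t]; [lia|]); rewrite XX_S in E; apply L_K in E;
    (destruct E as [E|[E|E]];
     [ | destruct (Z.eq_dec (z-1) l);
         [ rewrite e in E; assert (W := wall_inv x t l); rewrite E, Hl in W; simpl in W; discriminate
         | exact (HP' (z-1) ltac:(lia) t ltac:(lia) E) ]
       | exact (HP' z ltac:(lia) t ltac:(lia) E) ]).
    - replace (z+1) with i in E by lia. destruct (Hcl t) as [E'|E']; try lia; rewrite E' in E; discriminate.
    - destruct (Z.eq_dec (z+1) i).
      + rewrite e in E. destruct (Hcl t) as [E'|E']; try lia; rewrite E' in E; discriminate.
      + exact (IHk (z+1) ltac:(lia) ltac:(lia) t ltac:(lia) E). }
  exists (TP + L + 1)%nat. intros t Ht z Hz.
  destruct (Z_lt_le_dec z i).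
  - assert (W := wall_inv x t z). rewrite Hgap in W by lia.
    unfold cl. rewrite Hgap by lia.
    destruct (nonwall_cases _ W) as [E|[E|[E|E]]]; auto.
    + exfalso. exact (HG' z ltac:(lia) t ltac:(lia) E).
    + exfalso. exact (HK L z ltac:(lia) ltac:(unfold L; lia) t ltac:(lia) E).
    + exfalso. exact (HP' z ltac:(lia) t ltac:(lia) E).
  - apply HT; auto; lia.
Qed.


Lemma right_walls x m : (forall z, m+1 <= z -> x z = S1) ->
  forall t z, m+1 <= z -> XX x t z = S1.
Proof.
  intros H t. induction t; intros z Hz. apply H; auto.
  rewrite XX_S. rewrite (IHt z) by lia. rewrite (IHt (z+1)) by lia. destruct (XX x t (z-1)); reflexivity.
Qed.

Lemma phaseA x m : 0 <= m -> (forall z, m+1 <= z -> x z = S1) -> (forall z, z <= -m-1 -> x z = S1) ->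
  Qc x (-m).
Proof.
  intros Hm Hr Hl.
  assert (Hlo : wlx x (-m-1) = true). { unfold wlx. rewrite Hl by lia. reflexivity. }
  assert (Base : Qc x (m+1)).
  { exists 0%nat. intros t _ z Hz. rewrite right_walls with (m:=m) by auto.
    unfold cl, wlx. rewrite Hr by lia. reflexivity. }
  assert (D : forall n i, -m <= i -> (Z.to_nat (m+1-i) <= n)%nat -> Qc x i).
  { induction n; intros i Hi Hn.
    - apply Qc_mono with (m+1); auto; lia.
    - destruct (Nat.le_gt_cases (Z.to_nat (m+1-i)) n). apply IHn; auto.
      assert (Q1 : Qc x (i+1)) by (apply IHn; lia).
      destruct (wlx x i) eqn:E.
      + replace i with (i+1-1) by lia. apply wall_step. replace (i+1-1) with i by lia. auto. auto.
      + destruct (exists_gap (wlx x) (-m-1) (i+1) Hlo ltac:(lia)) as [l [Hl1 [Hl2 Hl3]]].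
        assert (l <> i) by (intro; subst; congruence).
        destruct Q1 as [T HT].
        apply Qc_mono with (l+1). lia.
        apply (gap_clean x l (i+1) T); auto; lia. }
  apply (D (Z.to_nat (m+1 - -m))); lia.
Qed.

Lemma autonomy u v lo : (forall z, lo < z -> u z = v z) -> in1D (u lo) = true -> in1D (v lo) = true ->
  forall s z, lo < z -> Nat.iter s pacman u z = Nat.iter s pacman v z.
Proof.
  intros H Hu Hv s. induction s; intros z Hz. simpl; auto.
  change (Nat.iter (S s) pacman u z) with (XX u (S s) z).
  change (Nat.iter (S s) pacman v z) with (XX v (S s) z).
  rewrite !XX_S. unfold XX. rewrite (IHs z), (IHs (z+1)) by lia.
  destruct (Z.eq_dec (z-1) lo).
  - apply L_awall.
    + change (in1D (XX u s (z-1)) = true). rewrite wall_inv. unfold wlx. rewrite e. auto.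
    + change (in1D (XX v s (z-1)) = true). rewrite wall_inv. unfold wlx. rewrite e. auto.
  - rewrite (IHs (z-1)) by lia. reflexivity.
Qed.

Lemma Ylem x m p : (forall z, m+1 <= z -> x z = S1) -> m + 1 < p ->
  forall t, Z.of_nat t <= p - m - 1 ->
  forall z, XX (fun z => if Z.eqb z p then SD else x z) t z =
            if Z.eqb z (p - Z.of_nat t) then SD else XX x t z.
Proof.
  intros Hr Hp t. induction t; intros Ht z.
  - simpl. replace (p - 0) with p by lia. reflexivity.
  - rewrite !XX_S. rewrite !IHt by lia.
    assert (R := right_walls x m Hr).
    set (c := p - Z.of_nat t).
    replace (p - Z.of_nat (S t)) with (c - 1) by (unfold c; lia).
    destruct (Z.eq_dec z (c-1)).
    + subst z. zeq. rewrite (R t (c-1)) by (unfold c; lia). replace (c-1+1) with c by lia. apply L_1D.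
    + destruct (Z.eq_dec z c).
      * subst z. zeq. rewrite !R by (unfold c; lia). reflexivity.
      * destruct (Z.eq_dec z (c+1)).
        -- subst z. zeq. rewrite !R by (unfold c; lia). reflexivity.
        -- zeq. reflexivity.
Qed.

Close Scope Z_scope.
Open Scope R_scope.

Lemma least_nat (P : nat -> Prop) n : P n -> exists k, P k /\ forall k', (k' < k)%nat -> ~ P k'.
Proof.
  induction n as [n IH] using lt_wf_ind. intros Hn.
  destruct (classic (exists k', (k' < n)%nat /\ P k')) as [[k' [H1 H2]]|H].
  - apply (IH k' H1 H2).
  - exists n. split; auto. intros k' Hk' Pk'. apply H. eauto.
Qed.

Lemma min_diff_ex x y : x <> y -> exists k, is_min_diff x y k.
Proof.
  intros Hxy.
  assert (exists j, x j <> y j).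
  { apply NNPP. intro H. apply Hxy. apply functional_extensionality. intro j.
    apply NNPP. intro Hj. apply H. eauto. }
  destruct H as [j Hj].
  destruct (least_nat (fun k => exists j, Z.abs_nat j = k /\ x j <> y j) (Z.abs_nat j))
    as [k [[j' [Hj1 Hj2]] Hmin]]; eauto.
  exists k. split.
  - destruct (Z_le_gt_dec 0 j').
    + left. replace (Z.of_nat k) with j' by lia. auto.
    + right. replace (- Z.of_nat k)%Z with j' by lia. auto.
  - intros j0 Hj0. apply NNPP. intro H. apply (Hmin _ Hj0). eauto.
Qed.

Lemma min_diff_spec x y : x <> y -> is_min_diff x y (min_diff x y).
Proof. intros H. unfold min_diff. apply epsilon_spec. apply min_diff_ex; auto. Qed.

Lemma dist_small x y M : (forall z, (- Z.of_nat M <= z <= Z.of_nat M)%Z -> x z = y z) ->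
  dist x y <= / 2 ^ (S M).
Proof.
  intros H. unfold dist. destruct excluded_middle_informative.
  - left. apply Rinv_0_lt_compat. apply pow_lt. lra.
  - destruct (min_diff_spec x y n) as [Hd _].
    assert (S M <= min_diff x y)%nat.
    { destruct (Nat.le_gt_cases (S M) (min_diff x y)); auto.
      exfalso. destruct Hd as [Hd|Hd]; apply Hd; apply H; lia. }
    apply Rinv_le_contravar. apply pow_lt; lra.
    apply Rle_pow; lra || auto.
Qed.

Lemma dist_one x y : x 0%Z <> y 0%Z -> dist x y = 1.
Proof.
  intros H. unfold dist. destruct excluded_middle_informative.
  - subst. tauto.
  - destruct (min_diff_spec x y n) as [_ Hd].
    destruct (min_diff x y) eqn:E.
    + simpl. lra.
    + exfalso. apply H. apply Hd. simpl. lia.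
Qed.


Theorem mainTheorem2 :
  exists delta : R, 0 < delta /\
    forall U : config -> Prop,
      is_open U -> (exists x, U x) ->
      exists l : list nat, forall n : nat, ~ N_T U delta n -> In n l.
Proof.
  exists (1/2). split. lra.
  intros U HU [x0 Hx0].
  destruct (HU x0 Hx0) as [eps [Heps Hball]].
  destruct (pow_lt_1_zero (/2) ltac:(rewrite Rabs_pos_eq; lra) eps Heps) as [M HM].
  set (m := Z.of_nat M).
  assert (inU : forall y : config, (forall z, (-m <= z <= m)%Z -> y z = x0 z) -> U y).
  { intros y Hy. apply Hball. eapply Rle_lt_trans. apply dist_small with (M := M).
    intros z Hz. symmetry. apply Hy. unfold m; lia.
    rewrite <- pow_inv. specialize (HM (S M) ltac:(lia)). rewrite Rabs_pos_eq in HM. auto.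
    apply pow_le. lra. }
  set (x := fun z => if ((-m <=? z) && (z <=? m))%Z then x0 z else S1).
  assert (Hxr : forall z, (m+1 <= z)%Z -> x z = S1).
  { intros z Hz. unfold x. destruct (Z.leb_spec (-m) z), (Z.leb_spec z m); simpl; auto; lia. }
  assert (Hxl : forall z, (z <= -m-1)%Z -> x z = S1).
  { intros z Hz. unfold x. destruct (Z.leb_spec (-m) z), (Z.leb_spec z m); simpl; auto; lia. }
  assert (xin : forall z, (-m <= z <= m)%Z -> x z = x0 z).
  { intros z Hz. unfold x. destruct (Z.leb_spec (-m) z), (Z.leb_spec z m); simpl; auto; lia. }
  destruct (phaseA x m ltac:(unfold m; lia) Hxr Hxl) as [TA HTA].
  set (wl := wlx x).
  assert (Hlo : wl (-m-1)%Z = true). { unfold wl, wlx. rewrite Hxl by lia. reflexivity. }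
  assert (Hj : wl (m+1)%Z = true). { unfold wl, wlx. rewrite Hxr by lia. reflexivity. }
  set (init := sig wl SD (m+1)).
  destruct (signal init wl (-m-1) Hlo _ (m+1) eq_refl Hj ltac:(unfold m; lia)
              ltac:(exists 0%nat; reflexivity) 0%Z ltac:(unfold m; lia)) as [s Hs].
  exists (seq 0 (TA + s + 1)). intros n Hn.
  destruct (le_lt_dec (TA + s + 1) n) as [Hge|Hlt].
  2:{ apply in_seq. lia. }
  exfalso. apply Hn.
  set (k := (n - s)%nat).
  set (p := (m + 1 + Z.of_nat k)%Z).
  set (y := fun z => if Z.eqb z p then SD else x z).
  assert (yin : forall z, (-m <= z <= m)%Z -> y z = x0 z).
  { intros z Hz. unfold y. destruct (Z.eqb_spec z p). unfold p in *; lia. auto. }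
  assert (HYk : forall z, XX y k z = if Z.eqb z (m+1) then SD else XX x k z).
  { intros z. unfold y. rewrite (Ylem x m p Hxr) by (unfold p; lia).
    replace (p - Z.of_nat k)%Z with (m+1)%Z by (unfold p; lia). reflexivity. }
  assert (Haut : forall z, (-m-1 < z)%Z -> Nat.iter s pacman (XX y k) z = Nat.iter s pacman init z).
  { apply autonomy.
    - intros z Hz. rewrite HYk. unfold init, sig. destruct (Z.eqb z (m+1)); auto.
      apply HTA. lia. lia.
    - rewrite HYk. destruct (Z.eqb_spec (-m-1) (m+1)). unfold m in *; lia.
      rewrite wall_inv. auto.
    - unfold init, sig. destruct (Z.eqb_spec (-m-1) (m+1)). unfold m in *; lia.
      unfold cl. rewrite Hlo. reflexivity. }
  assert (Hn' : n = (s + k)%nat) by (unfold k; lia).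
  assert (Hdiff : XX x n 0%Z <> XX y n 0%Z).
  { rewrite HTA by (auto; lia).
    unfold XX. rewrite Hn', Nat.iter_add. change (Nat.iter k pacman y) with (XX y k).
    rewrite Haut by (unfold m; lia). intro E. apply Hs. rewrite <- E. reflexivity. }
  unfold N_T, diam.
  destruct (Lub_Rbar_correct (fun r => exists a b, image_iter n U a /\ image_iter n U b /\ r = dist a b)) as [Hub _].
  eapply Rbar_lt_le_trans with (y := Finite 1).
  { simpl. lra. }
  apply Hub. exists (XX x n), (XX y n). split; [|split].
  - exists x. split. apply inU. auto. reflexivity.
  - exists y. split. apply inU. auto. reflexivity.
  - symmetry. apply dist_one. auto.
Qed.
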